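(* For finite sets $A, X \subset \mathbb{R}$ define the popular sums \[ P_A(X) = \left\{ y \in X+X : \sigma_X(y) \geq \frac{|X|^2}{8\,|X+X|\,\log|A|} \right\} \] and the rich set \[ R_A(X) = \left\{ x \in X : |(X+x)\cap P_A(X)| \geq \tfrac{3}{4}|X| \right\}. \] Then: (1) For every sufficiently large finite set $A\subset\mathbb{R}$, there exists $B \subset A$ with $|B| \geq \frac12 |A|$ such that \[ E_{\frac{12}{7}}(R_A(B)) \geq \frac{E_{\frac{12}{7}}(B)}{\log|A|}. \] (2) For such $A$ and $B$, there is $\Delta \in \mathbb{R}$ such that, defining \[ P_\Delta = \{ x : \delta_{R_A(B)}(x) \in [\Delta, 2\Delta)\}, \] we have \[ \Delta^{\frac{12}{7}}|P_\Delta| \approx E_{\frac{12}{7}}(R_A(B)) \approx E_{\frac{12}{7}}(B), \] and moreover \[ \Delta^2 |P_\Delta|^2 |B|^2 \ll E_3(B)\cdot \#\{(p_1,p_2,p_3) : p_1 - p_2 = p_3,\ p_1,p_2 \in P_A(B),\ p_3 \in P_\Delta\}. \]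
   Context: For finite $X\subset\mathbb{R}$: $X+X = \{x_1+x_2: x_i\in X\}$, $\sigma_X(y) = \#\{(x_1,x_2)\in X^2 : x_1+x_2 = y\}$, $\delta_X(x) = \#\{(x_1,x_2)\in X^2: x_1 - x_2 = x\}$, and for real $k \ge 1$, $E_k(X) = \sum_x \delta_X(x)^k$. Asymptotic notation is as $|A|\to\infty$: $F \ll G$ means $F = O(G)$ with an absolute constant; $F \lesssim G$ means $F \ll G (\log|A|)^{c}$ for some absolute constant $c$; $F \approx G$ means $F \lesssim G$ and $G \lesssim F$. *)

(* Defs.v *)
From HB Require Import structures.
From mathcomp Require Import all_boot all_order all_algebra finmap.
From mathcomp Require Import reals exp.
Set Implicit Arguments. Unset Strict Implicit. Unset Printing Implicit Defensive.
Import Order.TTheory GRing.Theory Num.Theory.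
Local Open Scope fset_scope.
Local Open Scope ring_scope.

Section AddComb.
Variable R : realType.
Implicit Types (X A : {fset R}) (x y : R).

Definition sumset X : {fset R} := [fset a + b | a : R in X, b : R in X].
Definition diffset X : {fset R} := [fset a - b | a : R in X, b : R in X].
Definition translate X x : {fset R} := [fset a + x | a : R in X].

Definition sigma X y : nat := (\sum_(a <- X) \sum_(b <- X) (a + b == y)%R)%N.
Definition delta X x : nat := (\sum_(a <- X) \sum_(b <- X) (a - b == x)%R)%N.

Definition energy (k : R) X : R :=
  \sum_(x <- diffset X) ((delta X x)%:R `^ k).

Definition popular A X : {fset R} :=
  [fset y in sumset X |
     ((#|` X|)%:R ^+ 2 : R) / (8 * (#|` sumset X|)%:R * ln (#|` A|)%:R)
       <= (sigma X y)%:R].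

Definition rich A X : {fset R} :=
  [fset x in X | (3 / 4 * (#|` X|)%:R : R) <= (#|` translate X x `&` popular A X|)%:R].

(* P_Delta = {x : delta_X(x) in [Delta, 2 Delta)} ; for Delta > 0 such x lie in X - X *)
Definition Pdelta X (D : R) : {fset R} :=
  [fset x in diffset X | (D <= (delta X x)%:R) && ((delta X x)%:R < 2 * D)].

Definition triples (P Q : {fset R}) : nat :=
  (\sum_(p1 <- P) \sum_(p2 <- P) \sum_(p3 <- Q) (p1 - p2 == p3)%R)%N.

End AddComb.

(* Main.v *)
Require Import Defs.
From HB Require Import structures.
From mathcomp Require Import all_boot all_order all_algebra finmap.
From mathcomp Require Import reals exp.
From mathcomp Require Import sequences.
From mathcomp Require Import ring lra.
Import Order.TTheory GRing.Theory Num.Theory.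
Local Open Scope fset_scope.
Local Open Scope ring_scope.

Section Helpers.
Context {R : realType}.
Implicit Types (X Y : {fset R}).

Lemma eqW' (x y : R) : x = y -> x <= y. Proof. by move=> ->. Qed.

Definition ind (b : bool) : R := (b : nat)%:R.

Lemma ind_ge0 b : 0 <= ind b. Proof. by case: b; rewrite /ind. Qed.
Lemma ind_le1 b : ind b <= 1. Proof. by case: b; rewrite /ind. Qed.
Lemma ind_neg b : ind (~~ b) = 1 - ind b.
Proof. by case: b; rewrite /ind /= ?subrr ?subr0. Qed.
Lemma ind_sq b : ind b * ind b = ind b. Proof. by case: b; rewrite /ind ?mulr1 ?mulr0. Qed.

Lemma sum_indic (T : eqType) (s : seq T) (y : T) (F : T -> R) : uniq s ->
  \sum_(x <- s) ind (y == x) * F x = ind (y \in s) * F y.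
Proof.
elim: s => [|a s IH] /=; first by rewrite big_nil /ind mul0r.
move=> /andP[nas us]; rewrite big_cons IH // in_cons.
have [->|nya] := eqVneq y a; rewrite /ind /=.
  by rewrite (negbTE nas) /= mul0r addr0.
by rewrite mul0r add0r.
Qed.

Lemma deltaR X x : (delta X x)%:R = \sum_(a <- X) \sum_(b <- X) ind (a - b == x).
Proof. by rewrite /delta natr_sum; apply: eq_bigr => a _; rewrite natr_sum. Qed.

Lemma sigmaR X y : (sigma X y)%:R = \sum_(a <- X) \sum_(b <- X) ind (a + b == y).
Proof. by rewrite /sigma natr_sum; apply: eq_bigr => a _; rewrite natr_sum. Qed.

Lemma mem_diffset X a b : a \in X -> b \in X -> a - b \in diffset X.
Proof. by move=> aX bX; apply/imfset2P; exists a => //; exists b. Qed.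

Lemma mem_sumset X a b : a \in X -> b \in X -> a + b \in sumset X.
Proof. by move=> aX bX; apply/imfset2P; exists a => //; exists b. Qed.

Lemma sum_pairs_diff X (g : R -> R) :
  \sum_(a <- X) \sum_(b <- X) g (a - b) =
  \sum_(x <- diffset X) (delta X x)%:R * g x.
Proof.
under [RHS]eq_bigr => x _ do rewrite deltaR mulr_suml.
rewrite [RHS]exchange_big /=; apply: eq_big_seq => a aX.
under [RHS]eq_bigr => x _ do rewrite mulr_suml.
rewrite [RHS]exchange_big /=; apply: eq_big_seq => b bX.
by rewrite sum_indic ?fset_uniq // mem_diffset // /ind mul1r.
Qed.

Lemma sum_pairs_sum X (g : R -> R) :
  \sum_(a <- X) \sum_(b <- X) g (a + b) =
  \sum_(y <- sumset X) (sigma X y)%:R * g y.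
Proof.
under [RHS]eq_bigr => x _ do rewrite sigmaR mulr_suml.
rewrite [RHS]exchange_big /=; apply: eq_big_seq => a aX.
under [RHS]eq_bigr => x _ do rewrite mulr_suml.
rewrite [RHS]exchange_big /=; apply: eq_big_seq => b bX.
by rewrite sum_indic ?fset_uniq // mem_sumset // /ind mul1r.
Qed.

Lemma ler_sum_seq (I : eqType) (r : seq I) (F G : I -> R) :
  (forall i, i \in r -> F i <= G i) -> \sum_(i <- r) F i <= \sum_(i <- r) G i.
Proof. by move=> H; rewrite big_seq [X in _ <= X]big_seq; apply: ler_sum. Qed.

Lemma sumr_ge0_seq (I : eqType) (r : seq I) (F : I -> R) :
  (forall i, i \in r -> 0 <= F i) -> 0 <= \sum_(i <- r) F i.
Proof. by move=> H; rewrite big_seq; apply: sumr_ge0. Qed.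

Lemma sub_sum_le X Y (f : R -> R) : X `<=` Y -> (forall x, x \in Y -> 0 <= f x) ->
  \sum_(x <- X) f x <= \sum_(x <- Y) f x.
Proof.
move=> XY f0.
rewrite (eq_big_seq (fun x => if x \in X then f x else 0)); last by move=> x ->.
rewrite (big_fset_incl _ XY); last by move=> x _ /negbTE ->.
apply: ler_sum_seq => x xY; case: ifP => // _; exact: f0.
Qed.


Lemma card_sum X : (#|` X|)%:R = \sum_(x <- X) (1 : R).
Proof. by rewrite card_fset_sum1 natr_sum. Qed.

Lemma delta_inner X a x :
  \sum_(b <- X) ind (a - b == x) = ind (a - x \in X).
Proof.
rewrite (eq_bigr (fun b => ind (a - x == b) * 1)).
  by rewrite sum_indic ?fset_uniq // mulr1.
move=> b _; rewrite mulr1; congr ind.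
apply/eqP/eqP => H; first by rewrite -H; ring.
by rewrite -H; ring.
Qed.

Lemma delta_le_card X x : (delta X x)%:R <= (#|` X|)%:R :> R.
Proof.
rewrite deltaR card_sum; apply: ler_sum_seq => a _.
by rewrite delta_inner ind_le1.
Qed.

Lemma delta0 X : (delta X 0)%:R = (#|` X|)%:R :> R.
Proof.
rewrite deltaR card_sum; apply: eq_big_seq => a aX.
by rewrite delta_inner subr0 aX.
Qed.

Lemma delta_ge0 X x : 0 <= (delta X x)%:R :> R.
Proof. exact: ler0n. Qed.

Lemma delta_ge1 X x : x \in diffset X -> 1 <= (delta X x)%:R :> R.
Proof.
case/imfset2P => a aX [b bX ->].
rewrite deltaR (big_fsetD1 a aX) /= delta_inner.
have -> : a - (a - b) = b by ring.
have -> : ind (b \in X) = 1 by rewrite /ind (_ : (b \in X) = true).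
rewrite lerDl; apply: sumr_ge0_seq => c _.
rewrite delta_inner; exact: ind_ge0.
Qed.

Lemma delta_mono X Y x : X `<=` Y -> (delta X x)%:R <= (delta Y x)%:R :> R.
Proof.
move=> XY; rewrite !deltaR.
apply: le_trans (_ : _ <= \sum_(a <- X) \sum_(b <- Y) ind (a - b == x)) _.
  apply: ler_sum_seq => a _; apply: sub_sum_le => // b _; exact: ind_ge0.
apply: sub_sum_le => // a _; apply: sumr_ge0_seq => b _; exact: ind_ge0.
Qed.

Lemma diffset_mono X Y : X `<=` Y -> diffset X `<=` diffset Y.
Proof.
move=> /fsubsetP XY; apply/fsubsetP => x /imfset2P [a aX [b bX ->]].
by apply: mem_diffset; apply: XY.
Qed.

Lemma energy_ge0 k X : 0 <= energy k X.
Proof. by apply: sumr_ge0_seq => x _; apply: powR_ge0. Qed.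

Lemma energy_mono k X Y : 0 <= k -> X `<=` Y -> energy k X <= energy k Y.
Proof.
move=> k0 XY; rewrite /energy.
apply: le_trans (_ : _ <= \sum_(x <- diffset X) (delta Y x)%:R `^ k) _.
  apply: ler_sum_seq => x _; apply: ge0_ler_powR => //; rewrite ?nnegrE ?ler0n //.
  exact: delta_mono.
apply: sub_sum_le; first exact: diffset_mono.
by move=> x _; apply: powR_ge0.
Qed.

Lemma sum_delta X : \sum_(x <- diffset X) (delta X x)%:R = (#|` X|)%:R ^+ 2 :> R.
Proof.
have := sum_pairs_diff X (fun=> 1).
under [RHS]eq_bigr => x _ do rewrite mulr1.
move=> <-; rewrite card_sum expr2 mulr_suml; apply: eq_bigr => a _.
by rewrite mul1r.
Qed.

Lemma energy_upper k X : 0 <= k ->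
  energy k X <= (#|` X|)%:R ^+ 2 * (#|` X|)%:R `^ k.
Proof.
move=> k0; rewrite -sum_delta mulr_suml /energy; apply: ler_sum_seq => x xd.
apply: le_trans (_ : _ <= (#|` X|)%:R `^ k) _.
  by apply: ge0_ler_powR => //; rewrite ?nnegrE ?ler0n // delta_le_card.
rewrite -[X in X <= _]mul1r; apply: ler_wpM2r; first exact: powR_ge0.
exact: delta_ge1.
Qed.

Lemma energy_lower k X : (0 < #|` X|)%N -> (#|` X|)%:R `^ k <= energy k X.
Proof.
move=> n0; case: (fset_0Vmem X) => [X0|[a aX]]; first by rewrite X0 cardfs0 in n0.
have d0 : 0 \in diffset X by rewrite -(subrr a) mem_diffset.
rewrite /energy (big_fsetD1 0 d0) /= delta0 -[X in X <= _]addr0 lerD2l.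
by apply: sumr_ge0_seq => x _; apply: powR_ge0.
Qed.

End Helpers.
Section Rich.
Context {R : realType}.
Implicit Types (A X Y : {fset R}).

Lemma in_fset_sep (S : {fset R}) (p : R -> bool) y :
  (y \in [fset x in S | p x]) = (y \in S) && p y.
Proof. by rewrite !inE. Qed.

Lemma card_sub_ind X Y : Y `<=` X -> (#|` Y|)%:R = \sum_(x <- X) ind (x \in Y) :> R.
Proof.
move=> YX; rewrite card_sum (eq_big_seq (fun x => ind (x \in Y))); last first.
  by move=> x ->.
by rewrite (big_fset_incl _ YX) // => x _ /negbTE ->.
Qed.

Lemma card_trans_cap X x (P : {fset R}) :
  (#|` translate X x `&` P|)%:R = \sum_(b <- X) ind (b + x \in P) :> R.
Proof.
rewrite (card_sub_ind _ _ (fsubsetIl _ _)).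
rewrite (eq_big_seq (fun y => ind (y \in P))); last first.
  by move=> y yT; rewrite in_fsetI yT.
rewrite /translate big_imfset //=.
by move=> a b _ _ /addIr.
Qed.

Lemma rich_sub A X : rich A X `<=` X.
Proof. by apply/fsubsetP => x; rewrite /rich inE => /andP[]. Qed.

End Rich.
Section Rich2.
Context {R : realType}.
Implicit Types (A X Y : {fset R}).

Lemma rich_large A X : 0 < ln (#|` A|)%:R :> R ->
  2 * ln (#|` A|)%:R * ((#|` X|)%:R - (#|` rich A X|)%:R) <= (#|` X|)%:R :> R.
Proof.
move=> L0.
set L := ln _; set n := (#|` X|)%:R; set r := (#|` rich A X|)%:R.
have rn : r <= n by rewrite ler_nat fsubset_leq_card // rich_sub.
have [X0|Xpos] := posnP #|` X|.
  have r0 : r = 0.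
    have := fsubset_leq_card (rich_sub A X); rewrite X0 leqn0 => /eqP.
    by rewrite /r => ->.
  by rewrite /n X0 r0 subrr mulr0.
have n0 : 0 < n by rewrite ltr0n.
set P := popular A X; set S := sumset X.
have Spos : (0 < #|` S|)%N.
  case: (fset_0Vmem X) => [E|[a aX]]; first by rewrite E cardfs0 in Xpos.
  rewrite cardfs_gt0; apply/fset0Pn; exists (a + a); exact: mem_sumset.
set Z : R := \sum_(x <- X) \sum_(b <- X) ind (x + b \notin P).
set thr : R := n ^+ 2 / (8 * (#|` S|)%:R * L).
have U : Z <= n ^+ 2 / (8 * L).
  rewrite /Z (sum_pairs_sum X (fun y => ind (y \notin P))).
  apply: le_trans (_ : _ <= \sum_(y <- S) thr) _.
    apply: ler_sum_seq => y yS; rewrite /ind.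
    case: (boolP (y \in P)) => yP /=; first by rewrite mulr0 /thr divr_ge0 ?sqr_ge0 // !mulr_ge0 // ?ler0n // ltW.
    rewrite mulr1; move: yP; rewrite /P /popular in_fset_sep yS /= -/S -/n -/L -/thr.
    by rewrite -ltNge => /ltW.
  have -> : \sum_(y <- S) thr = (#|` S|)%:R * thr.
    by rewrite card_sum mulr_suml; apply: eq_bigr => *; rewrite mul1r.
  rewrite /thr; apply: eqW'; field.
  by rewrite pnatr_eq0 -lt0n Spos /= gt_eqF.
have Lo : (n - r) * (n / 4) <= Z.
  have -> : n - r = \sum_(x <- X) ind (R:=R) (x \notin rich A X).
    rewrite /n /r card_sum (card_sub_ind _ _ (rich_sub A X)).
    transitivity (\sum_(x <- X) (1 - ind (x \in rich A X)) : R); first by rewrite sumrB.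
    by apply: eq_bigr => x _; rewrite ind_neg.
  rewrite mulr_suml; apply: ler_sum_seq => x xX.
  have Fx : \sum_(b <- X) ind (R:=R) (x + b \notin P) = n - (#|` translate X x `&` P|)%:R.
    rewrite card_trans_cap /n card_sum.
    transitivity (\sum_(b <- X) (1 - ind (b + x \in P)) : R); last by rewrite sumrB.
    apply: eq_bigr => b _.
    by rewrite addrC ind_neg.
  rewrite Fx; case: (boolP (x \in rich A X)) => xr.
    rewrite /ind /= mul0r subr_ge0 ler_nat.
    rewrite (_ : #|` X| = #|` translate X x|).
      by apply: fsubset_leq_card; exact: fsubsetIl.
    by rewrite /translate card_imfset //= => a b /addIr.
  move: xr; rewrite /rich in_fset_sep xX /= -/n -ltNge => xr.
  rewrite /ind /= mul1r; lra.
have H : n * (2 * L * (n - r)) <= n * n.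
  have -> : n * (2 * L * (n - r)) = (8 * L) * ((n - r) * (n / 4)) by field.
  apply: le_trans (_ : _ <= (8 * L) * (n ^+ 2 / (8 * L))) _.
    by rewrite ler_pM2l ?mulr_gt0 //; apply: le_trans U.
  by apply: eqW'; field; rewrite gt_eqF.
by rewrite ler_pM2l in H.
Qed.
End Rich2.
Section Part1.
Context {R : realType}.
Implicit Types (A X Y : {fset R}).

Definition Bs A i := iter i (rich A) A.

Lemma Bs_sub A i : Bs A i `<=` A.
Proof.
elim: i => [|i IH] /=; first exact: fsubset_refl.
exact: fsubset_trans (rich_sub _ _) IH.
Qed.

Lemma Bs_size A i : 0 < ln (#|` A|)%:R :> R ->
  2 * ln (#|` A|)%:R * ((#|` A|)%:R - (#|` Bs A i|)%:R) <= i%:R * (#|` A|)%:R :> R.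
Proof.
move=> L0; elim: i => [|i IH]; first by rewrite /Bs /= subrr mulr0 mul0r.
have h := rich_large A (Bs A i) L0.
have h2 : (#|` Bs A i|)%:R <= (#|` A|)%:R :> R by rewrite ler_nat fsubset_leq_card // Bs_sub.
rewrite -/(Bs A i) in h.
have -> : Bs A i.+1 = rich A (Bs A i) by [].
rewrite -natr1 /=.
set L := ln _ in h IH *.
set a := (#|` A|)%:R in IH h2 *; set b := (#|` Bs A i|)%:R in IH h h2 *.
set c := (#|` rich A (Bs A i)|)%:R in h *.
have -> : 2 * L * (a - c) = 2 * L * (a - b) + 2 * L * (b - c) by ring.
lra.
Qed.

Lemma Bs_energy k A j : 0 < ln (#|` A|)%:R :> R ->
  (exists i, (i < j)%N /\ energy k (Bs A i) / ln (#|` A|)%:R <= energy k (rich A (Bs A i)))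
  \/ energy k (Bs A j) * ln (#|` A|)%:R ^+ j <= energy k A.
Proof.
move=> L0; elim: j => [|j [[i [ij Hi]]|IH]].
- by right; rewrite expr0 mulr1.
- by left; exists i; split => //; apply: ltnW.
- case: (leP (energy k (Bs A j) / ln (#|` A|)%:R) (energy k (rich A (Bs A j)))) => H.
    by left; exists j.
  right; apply: le_trans IH.
  have -> : Bs A j.+1 = rich A (Bs A j) by [].
  rewrite exprS mulrA; apply: ler_wpM2r; first by apply: exprn_ge0; apply: ltW.
  by rewrite -ler_pdivlMr // ltW.
Qed.

End Part1.
Section Part1b.
Context {R : realType}.

Lemma pow2_le4 (k : R) : 0 <= k <= 2 -> 2 `^ k <= 4 :> R.
Proof.
case/andP => k0 k2.
apply: le_trans (_ : _ <= 2 `^ 2) _; first by apply: ler_powR => //; lra.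
by rewrite powR_mulrn // expr2; lra.
Qed.

Lemma final_contra (L n : R) (j : nat) : (3 <= j)%N -> expR 4 <= L ->
  0 < n -> n < expR (j.+1%:R) -> L ^+ j <= 4 * n ^+ 2 -> False.
Proof.
move=> jge e4L n0 nlt key.
have jR : 3 <= j%:R :> R by rewrite (ler_nat R 3 j).
have Lj : expR (j%:R * 4) <= L ^+ j.
  rewrite expRM_natl; apply: lerXn2r; rewrite ?nnegrE //; first exact: expR_ge0.
  by apply: le_trans e4L; apply: expR_ge0.
have n2 : n ^+ 2 < expR (j.+1%:R) ^+ 2.
  by rewrite ltr_pXn2r // ?nnegrE; [apply: ltW | apply: ltW; apply: expR_gt0].
have e1 : 4 * expR (j.+1%:R) ^+ 2 <= expR (j%:R * 4) :> R.
  rewrite -expRM_natl.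
  have -> : j%:R * 4 = 2%:R * j.+1%:R + (2 * j%:R - 2) :> R.
    by rewrite -natr1; ring.
  rewrite expRD mulrC; apply: ler_wpM2l; first exact: expR_ge0.
  apply: le_trans (expR_ge1Dx _); lra.
lra.
Qed.

Lemma part1 (k : R) : 0 <= k <= 2 ->
  exists N : nat, forall A : {fset R}, (N <= #|` A|)%N ->
     exists B : {fset R}, [/\ B `<=` A,
       (#|` A|)%:R / 2 <= (#|` B|)%:R :> R &
       energy k B / ln (#|` A|)%:R <= energy k (rich A B)].
Proof.
move=> /[dup] kk /andP[k0 k2].
exists (Num.truncn (expR (expR 4 : R))).+1 => A HA.
set n := (#|` A|)%:R : R.
have nbig : expR (expR 4) < n.
  apply: lt_le_trans (truncnS_gt _) _; by rewrite ler_nat.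
have n0 : 0 < n by apply: lt_trans nbig; apply: expR_gt0.
set L := ln n.
have Lbig : expR 4 < L.
  by rewrite -[X in X < _](expRK) /L ltr_ln // posrE expR_gt0.
have e4 : 5 <= expR 4 :> R by apply: le_trans (expR_ge1Dx _); lra.
have L0 : 0 < L by lra.
set j := Num.truncn L.
have jL : j%:R <= L < j.+1%:R by apply: truncn_itv; lra.
have size_i : forall i, (i <= j)%N -> n / 2 <= (#|` Bs A i|)%:R.
  move=> i ij; have := Bs_size A i L0; rewrite -/n -/L => h.
  have : i%:R <= L by apply: le_trans (_ : _ <= j%:R) _; [rewrite ler_nat|case/andP: jL].
  move=> iL.
  have h' : L * (2 * (n - (#|` Bs A i|)%:R)) <= L * n.
    rewrite mulrA [L * 2]mulrC; apply: le_trans h _.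
    by apply: ler_wpM2r; [exact: ltW|].
  rewrite ler_pM2l // in h'; lra.
case: (Bs_energy k A j L0) => [[i [ij Hi]]|H].
  exists (Bs A i); split => //; first exact: Bs_sub.
  by apply: size_i; apply: ltnW.
exfalso.
have hk := size_i j (leqnn j).
set m := (#|` Bs A j|)%:R in hk.
have n2pos : 0 < n / 2 by apply: divr_gt0.
have mpos : (0 < #|` Bs A j|)%N by rewrite -(ltr0n R) -/m; apply: lt_le_trans hk.
have Elow := energy_lower k (Bs A j) mpos; rewrite -/m in Elow.
have Eup := energy_upper k A k0; rewrite -/n in Eup.
have p2 : n `^ k <= 4 * (n / 2) `^ k.
  have -> : n `^ k = 2 `^ k * (n / 2) `^ k.
    rewrite -powRM //; last by apply: divr_ge0 => //; apply: ltW.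
    by congr (_ `^ _); field.
  by apply: ler_wpM2r; [exact: powR_ge0 | exact: pow2_le4].
have hpos : 0 < (n / 2) `^ k by apply: powR_gt0.
have Em : (n / 2) `^ k <= m `^ k.
  by apply: ge0_ler_powR => //; rewrite nnegrE; [apply: ltW | apply: ltW; apply: lt_le_trans hk].
rewrite -/L in H.
have Lj0 : 0 <= L ^+ j by apply: exprn_ge0; apply: ltW.
have key : (n / 2) `^ k * L ^+ j <= (n / 2) `^ k * (4 * n ^+ 2).
  apply: le_trans (_ : _ <= energy k (Bs A j) * L ^+ j) _.
    by apply: ler_wpM2r => //; apply: le_trans Elow.
  apply: le_trans H _; apply: le_trans Eup _.
  rewrite mulrC; apply: le_trans (_ : _ <= (4 * (n / 2) `^ k) * n ^+ 2) _.
    by apply: ler_wpM2r => //; apply: exprn_ge0; apply: ltW.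
  by apply: eqW'; ring.
rewrite ler_pM2l // in key.
have jge : (3 <= j)%N by rewrite /j truncn_ge_nat ?(ltW L0) //; apply: le_trans (ltW Lbig); apply: le_trans e4; rewrite ler_nat.
have nlt : n < expR (j.+1%:R).
  rewrite -[n]lnK ?posrE // -/L ltr_expR; by case/andP: jL.
exact: (final_contra _ _ _ jge (ltW Lbig) n0 nlt key).
Qed.

End Part1b.
Section CS.
Context {R : realType}.

Lemma cauchy_schwarz (I : Type) (r : seq I) (a b : I -> R) :
  (\sum_(i <- r) a i * b i) ^+ 2 <= (\sum_(i <- r) a i ^+ 2) * (\sum_(i <- r) b i ^+ 2).
Proof.
have E : \sum_(i <- r) \sum_(j <- r) (a i * b j - a j * b i) ^+ 2 =
  2 * ((\sum_(i <- r) a i ^+ 2) * (\sum_(i <- r) b i ^+ 2) - (\sum_(i <- r) a i * b i) ^+ 2).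
  have -> : (\sum_(i <- r) a i ^+ 2) * (\sum_(i <- r) b i ^+ 2) =
     \sum_(i <- r) \sum_(j <- r) (a i ^+ 2 * b j ^+ 2).
    by rewrite mulr_suml; apply: eq_bigr => i _; rewrite mulr_sumr.
  have -> : (\sum_(i <- r) a i * b i) ^+ 2 =
     \sum_(i <- r) \sum_(j <- r) (a i * b i * (a j * b j)).
    by rewrite expr2 mulr_suml; apply: eq_bigr => i _; rewrite mulr_sumr.
  have H2 : \sum_(i <- r) \sum_(j <- r) (a i ^+ 2 * b j ^+ 2) =
     \sum_(i <- r) \sum_(j <- r) (a j ^+ 2 * b i ^+ 2).
    by rewrite exchange_big.
  transitivity (\sum_(i <- r) \sum_(j <- r) ((a i ^+ 2 * b j ^+ 2 + a j ^+ 2 * b i ^+ 2)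
       - 2 * (a i * b i * (a j * b j)))).
    by apply: eq_bigr => i _; apply: eq_bigr => j _; ring.
  under eq_bigr => i _ do rewrite sumrB big_split /=.
  rewrite sumrB big_split /=.
  have H3 : \sum_(i <- r) \sum_(j <- r) (2 * (a i * b i * (a j * b j))) =
    2 * \sum_(i <- r) \sum_(j <- r) (a i * b i * (a j * b j)).
    by rewrite mulr_sumr; apply: eq_bigr => i _; rewrite mulr_sumr.
  rewrite H3 -H2; ring.
have : 0 <= \sum_(i <- r) \sum_(j <- r) (a i * b j - a j * b i) ^+ 2.
  by apply: sumr_ge0 => i _; apply: sumr_ge0 => j _; apply: sqr_ge0.
rewrite E pmulr_rge0 ?subr_ge0 //.
Qed.

End CS.
Section Tri.
Context {R : realType}.
Implicit Types (A X Y : {fset R}).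

Lemma ind_in_sum (s : seq R) y : uniq s -> ind (y \in s) = \sum_(x <- s) ind (R:=R) (y == x).
Proof. by move=> us; rewrite -[LHS]mulr1 -sum_indic //; apply: eq_bigr => x _; rewrite mulr1. Qed.

Lemma ind_eq_sym (x y : R) : ind (R:=R) (x == y) = ind (y == x).
Proof. by rewrite eq_sym. Qed.

Lemma switch (P X : {fset R}) (b : R) (F : R -> R) :
  \sum_(p <- P) ind (p - b \in X) * F p = \sum_(r <- X) ind (b + r \in P) * F (b + r).
Proof.
transitivity (\sum_(p <- P) \sum_(r <- X) ind (R:=R) (b + r == p) * F p).
  apply: eq_bigr => p _; rewrite (ind_in_sum _ _ (fset_uniq X)) mulr_suml.
  apply: eq_bigr => r _; congr (ind _ * _).
  by apply/eqP/eqP => H; [rewrite -H; ring | rewrite -H; ring].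
rewrite exchange_big /=; apply: eq_bigr => r _.
rewrite -sum_indic ?fset_uniq //.
Qed.

Lemma exch4 (I J : Type) (s : seq I) (t : seq J) (F : I -> I -> J -> J -> R) :
  \sum_(a <- s) \sum_(b <- s) \sum_(c <- t) \sum_(d <- t) F a b c d =
  \sum_(c <- t) \sum_(d <- t) \sum_(a <- s) \sum_(b <- s) F a b c d.
Proof.
under eq_bigr => a _ do rewrite exchange_big.
rewrite exchange_big.
under eq_bigr => c _ do under eq_bigr => a _ do rewrite exchange_big.
by under eq_bigr => c _ do rewrite exchange_big.
Qed.

Lemma sq_swap (P Bs : seq R) (g : R -> R -> R) :
  \sum_(p1 <- P) \sum_(p2 <- P) (\sum_(b <- Bs) g p1 b * g p2 b) ^+ 2 =
  \sum_(b <- Bs) \sum_(b' <- Bs) (\sum_(p <- P) g p b * g p b') ^+ 2.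
Proof.
transitivity (\sum_(p1 <- P) \sum_(p2 <- P) \sum_(b <- Bs) \sum_(b' <- Bs)
   (g p1 b * g p2 b * (g p1 b' * g p2 b'))).
  apply: eq_bigr => p1 _; apply: eq_bigr => p2 _.
  by rewrite expr2 mulr_suml; apply: eq_bigr => b _; rewrite mulr_sumr.
transitivity (\sum_(b <- Bs) \sum_(b' <- Bs) \sum_(p1 <- P) \sum_(p2 <- P)
   (g p1 b * g p2 b * (g p1 b' * g p2 b'))).
  exact: exch4.
apply: eq_bigr => b _; apply: eq_bigr => b' _.
rewrite expr2 mulr_suml; apply: eq_bigr => p1 _; rewrite mulr_sumr.
by apply: eq_bigr => p2 _; ring.
Qed.

End Tri.
Section Tri2.
Context {R : realType}.
Implicit Types (A X Y : {fset R}).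

Lemma delta_alt X x : (delta X x)%:R = \sum_(v <- X) ind (R:=R) (v + x \in X).
Proof.
rewrite deltaR exchange_big /=; apply: eq_bigr => v _.
rewrite (ind_in_sum _ _ (fset_uniq X)); apply: eq_bigr => u _.
congr ind.
by apply/eqP/eqP => H; [rewrite -H; ring | rewrite -H; ring].
Qed.

Lemma f_le_delta (P X : {fset R}) b b' :
  \sum_(p <- P) ind (p - b \in X) * ind (p - b' \in X) <= (delta X (b - b'))%:R :> R.
Proof.
rewrite switch delta_alt; apply: ler_sum_seq => r _.
apply: le_trans (_ : _ <= 1 * ind (b + r - b' \in X)) _.
  by apply: ler_wpM2r; [exact: ind_ge0 | exact: ind_le1].
by rewrite mul1r (_ : b + r - b' = r + (b - b')) //; ring.
Qed.

Lemma c2_bound (P X : {fset R}) :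
  \sum_(p1 <- P) \sum_(p2 <- P) (\sum_(b <- X) ind (p1 - b \in X) * ind (p2 - b \in X)) ^+ 2
  <= energy 3 X.
Proof.
rewrite (sq_swap P X (fun p b => ind (p - b \in X))).
apply: le_trans (_ : _ <= \sum_(b <- X) \sum_(b' <- X) ((delta X (b - b'))%:R) ^+ 2) _.
  apply: ler_sum_seq => b _; apply: ler_sum_seq => b' _.
  rewrite !expr2; apply: ler_pM; rewrite ?f_le_delta //;
  by apply: sumr_ge0_seq => p _; apply: mulr_ge0; apply: ind_ge0.
rewrite (sum_pairs_diff X (fun x => (delta X x)%:R ^+ 2)) /energy.
apply: eqW'; apply: eq_bigr => x _.
by rewrite powR_mulrn ?ler0n // exprS.
Qed.

Lemma triplesR (P Q : {fset R}) :
  (triples P Q)%:R = \sum_(p1 <- P) \sum_(p2 <- P) ind (R:=R) (p1 - p2 \in Q).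
Proof.
rewrite /triples natr_sum; apply: eq_bigr => p1 _; rewrite natr_sum.
apply: eq_bigr => p2 _; rewrite natr_sum (ind_in_sum _ _ (fset_uniq Q)).
by [].
Qed.

End Tri2.
Section Tri3.
Context {R : realType}.
Implicit Types (A X Y : {fset R}).

Lemma pair_prod_bound A B r1 r2 : r1 \in rich A B -> r2 \in rich A B ->
  (#|` B|)%:R / 2 <= \sum_(b <- B) ind (b + r1 \in popular A B) * ind (R:=R) (b + r2 \in popular A B).
Proof.
rewrite /rich !in_fset_sep => /andP[_ h1] /andP[_ h2].
rewrite !card_trans_cap in h1 h2.
apply: le_trans (_ : _ <= \sum_(b <- B) (ind (b + r1 \in popular A B) + ind (R:=R) (b + r2 \in popular A B) - 1)) _.
  rewrite sumrB big_split /= -card_sum; lra.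
apply: ler_sum_seq => b _.
by case: (b + r1 \in _); case: (b + r2 \in _); rewrite /ind /=; lra.
Qed.

Lemma sum_PD X D :
  D * (#|` Pdelta X D|)%:R <= \sum_(r1 <- X) \sum_(r2 <- X) ind (R:=R) (r1 - r2 \in Pdelta X D).
Proof.
rewrite (sum_pairs_diff X (fun x => ind (x \in Pdelta X D))).
rewrite (card_sub_ind (diffset X)); last first.
  by apply/fsubsetP => x; rewrite /Pdelta in_fset_sep => /andP[].
rewrite mulr_sumr; apply: ler_sum_seq => x xd.
case xP: (x \in Pdelta X D); rewrite /ind /= ?mulr0 ?mulr1 //.
by move: xP; rewrite /Pdelta in_fset_sep xd /= => /andP[].
Qed.

End Tri3.
Section Tri4.
Context {R : realType}.
Implicit Types (A X Y : {fset R}).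

Lemma N_eq A B D :
  let Rb := rich A B in let Pp := popular A B in let PD := Pdelta Rb D in
  \sum_(p1 <- Pp) \sum_(p2 <- Pp) ind (p1 - p2 \in PD) *
      (\sum_(b <- B) ind (p1 - b \in Rb) * ind (p2 - b \in Rb))
  = \sum_(r1 <- Rb) \sum_(r2 <- Rb) ind (r1 - r2 \in PD) *
      (\sum_(b <- B) ind (b + r1 \in Pp) * ind (R:=R) (b + r2 \in Pp)).
Proof.
move=> Rb Pp PD.
transitivity (\sum_(p1 <- Pp) \sum_(p2 <- Pp) \sum_(b <- B)
   (ind (p1 - b \in Rb) * (ind (p2 - b \in Rb) * ind (R:=R) (p1 - p2 \in PD)))).
  apply: eq_bigr => p1 _; apply: eq_bigr => p2 _; rewrite mulr_sumr.
  by apply: eq_bigr => b _; ring.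
under eq_bigr => p1 _ do rewrite exchange_big.
rewrite exchange_big /=.
transitivity (\sum_(b <- B) \sum_(p1 <- Pp) ind (p1 - b \in Rb) *
   \sum_(p2 <- Pp) (ind (p2 - b \in Rb) * ind (R:=R) (p1 - p2 \in PD))).
  by apply: eq_bigr => b _; apply: eq_bigr => p1 _; rewrite mulr_sumr.
transitivity (\sum_(b <- B) \sum_(p1 <- Pp) ind (p1 - b \in Rb) *
   \sum_(r2 <- Rb) (ind (b + r2 \in Pp) * ind (R:=R) (p1 - (b + r2) \in PD))).
  apply: eq_bigr => b _; apply: eq_bigr => p1 _; congr (_ * _).
  exact: (switch Pp Rb b (fun p2 => ind (p1 - p2 \in PD))).
transitivity (\sum_(b <- B) \sum_(r1 <- Rb) ind (b + r1 \in Pp) *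
   \sum_(r2 <- Rb) (ind (b + r2 \in Pp) * ind (R:=R) (b + r1 - (b + r2) \in PD))).
  apply: eq_bigr => b _.
  exact: (switch Pp Rb b (fun p1 => \sum_(r2 <- Rb) (ind (b + r2 \in Pp) * ind (R:=R) (p1 - (b + r2) \in PD)))).
transitivity (\sum_(b <- B) \sum_(r1 <- Rb) \sum_(r2 <- Rb)
   (ind (r1 - r2 \in PD) * (ind (b + r1 \in Pp) * ind (R:=R) (b + r2 \in Pp)))).
  apply: eq_bigr => b _; apply: eq_bigr => r1 _; rewrite mulr_sumr.
  apply: eq_bigr => r2 _.
  rewrite (_ : b + r1 - (b + r2) = r1 - r2); last by ring.
  ring.
rewrite exchange_big /=.
under eq_bigr => r1 _ do rewrite exchange_big.
apply: eq_bigr => r1 _; apply: eq_bigr => r2 _.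
by rewrite mulr_sumr.
Qed.

End Tri4.
Section Tri5.
Context {R : realType}.
Implicit Types (A X Y : {fset R}).

Lemma ind_sub X Y x : Y `<=` X -> ind (x \in Y) <= ind (R:=R) (x \in X).
Proof.
move=> /fsubsetP YX; case xY: (x \in Y); last exact: ind_ge0.
by rewrite (YX _ xY).
Qed.

Lemma triple_bound A B D : 0 < D ->
  D ^+ 2 * (#|` Pdelta (rich A B) D|)%:R ^+ 2 * (#|` B|)%:R ^+ 2
  <= 4 * (energy 3 B * (triples (popular A B) (Pdelta (rich A B) D))%:R) :> R.
Proof.
move=> D0.
set Rb := rich A B; set Pp := popular A B; set PD := Pdelta Rb D.
set n := (#|` B|)%:R : R.
pose c p1 p2 := \sum_(b <- B) ind (p1 - b \in Rb) * ind (R:=R) (p2 - b \in Rb).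
pose N := \sum_(p1 <- Pp) \sum_(p2 <- Pp) ind (p1 - p2 \in PD) * c p1 p2.
have Lo : n / 2 * (D * (#|` PD|)%:R) <= N.
  rewrite /N /c N_eq -/Rb -/Pp -/PD.
  apply: le_trans (_ : _ <= \sum_(r1 <- Rb) \sum_(r2 <- Rb) ind (r1 - r2 \in PD) * (n / 2)) _.
    apply: le_trans (_ : _ <= n / 2 * \sum_(r1 <- Rb) \sum_(r2 <- Rb) ind (R:=R) (r1 - r2 \in PD)) _.
      by apply: ler_wpM2l; [apply: divr_ge0; rewrite ?ler0n | exact: sum_PD].
    apply: eqW'; rewrite mulr_sumr; apply: eq_bigr => r1 _; rewrite mulr_sumr.
    by apply: eq_bigr => r2 _; rewrite mulrC.
  apply: ler_sum_seq => r1 r1R; apply: ler_sum_seq => r2 r2R.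
  by apply: ler_wpM2l; [exact: ind_ge0 | exact: pair_prod_bound].
have Up : N ^+ 2 <= (triples Pp PD)%:R * energy 3 B.
  have E1 := big_allpairs (op := +%R) (idx := 0) (r1 := Pp) (r2 := Pp)
     (F := fun q => ind (q.1 - q.2 \in PD) * c q.1 q.2).
  rewrite /= in E1; rewrite /N -E1.
  have CS := cauchy_schwarz _ [seq (i1, i2) | i1 <- Pp, i2 <- Pp] (fun q => ind (R:=R) (q.1 - q.2 \in PD)) (fun q => c q.1 q.2).
  simpl in CS.
  apply: le_trans CS _.
  apply: ler_pM.
  - by apply: sumr_ge0 => q _; apply: sqr_ge0.
  - by apply: sumr_ge0 => q _; apply: sqr_ge0.
  - rewrite big_allpairs triplesR; apply: eqW'; apply: eq_bigr => p1 _.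
    by apply: eq_bigr => p2 _; rewrite expr2 ind_sq.
  rewrite big_allpairs; apply: le_trans (c2_bound Pp B).
  apply: ler_sum_seq => p1 _; apply: ler_sum_seq => p2 _.
  have c0 : 0 <= c p1 p2.
    by apply: sumr_ge0_seq => b _; apply: mulr_ge0; apply: ind_ge0.
  rewrite /= !expr2; apply: ler_pM => //.
    1,2: by apply: ler_sum_seq => b _; apply: ler_pM; rewrite ?ind_ge0 ?ind_sub ?rich_sub.
have N0 : 0 <= n / 2 * (D * (#|` PD|)%:R).
  by apply: mulr_ge0; [apply: divr_ge0; rewrite ?ler0n | apply: mulr_ge0; rewrite ?ler0n ?ltW].
have Sq : (n / 2 * (D * (#|` PD|)%:R)) ^+ 2 <= N ^+ 2.
  by rewrite !expr2; apply: ler_pM.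
have -> : D ^+ 2 * (#|` PD|)%:R ^+ 2 * n ^+ 2 = 4 * (n / 2 * (D * (#|` PD|)%:R)) ^+ 2.
  by field.
rewrite ler_pM2l //; apply: le_trans Sq _; apply: le_trans Up _.
by rewrite mulrC.
Qed.

End Tri5.
Section Dyadic.
Context {R : realType}.
Implicit Types (A X Y : {fset R}).

Lemma sum_const_seq (T : Type) (s : seq T) (c : R) : \sum_(i <- s) c = (size s)%:R * c.
Proof.
elim: s => [|a s IH]; first by rewrite big_nil mul0r.
by rewrite big_cons IH /= -natr1; ring.
Qed.

Lemma argmax_nat (g : nat -> R) (m : nat) :
  exists i0, (i0 <= m)%N /\ forall i, (i <= m)%N -> g i <= g i0.
Proof.
elim: m => [|m [i0 [i0m H]]].
  by exists 0%N; split => // i; rewrite leqn0 => /eqP ->.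
case: (leP (g m.+1) (g i0)) => h.
  exists i0; split; first by apply: leqW.
  move=> i; rewrite leq_eqVlt => /orP[/eqP ->|] //; rewrite ltnS; exact: H.
exists m.+1; split => // i; rewrite leq_eqVlt => /orP[/eqP ->|] //; rewrite ltnS => im.
by apply: le_trans (H i im) (ltW h).
Qed.

Lemma PD_mem X D x : (x \in Pdelta X D) =
  [&& x \in diffset X, D <= (delta X x)%:R & (delta X x)%:R < 2 * D].
Proof. by rewrite /Pdelta in_fset_sep. Qed.

Lemma PD_sub X D : Pdelta X D `<=` diffset X.
Proof. by apply/fsubsetP => x; rewrite PD_mem => /andP[]. Qed.

Lemma sum_PD_const X D (c : R) :
  \sum_(x <- diffset X) ind (x \in Pdelta X D) * c = c * (#|` Pdelta X D|)%:R.
Proof.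
by rewrite (card_sub_ind _ _ (PD_sub X D)) mulr_sumr; apply: eq_bigr => x _; rewrite mulrC.
Qed.

Lemma dyadic X (k : R) (Nn : nat) : 0 <= k <= 2 -> (#|` X| <= Nn)%N ->
  exists D : R, 0 < D /\
    D `^ k * (#|` Pdelta X D|)%:R <= energy k X /\
    energy k X <= 4 * (trunc_log 2 Nn).+1%:R * (D `^ k * (#|` Pdelta X D|)%:R).
Proof.
move=> /[dup] kk /andP[k0 k2] XN.
set m := trunc_log 2 Nn.
pose g i := ((2 ^ i)%N%:R : R) `^ k * (#|` Pdelta X (2 ^ i)%N%:R|)%:R.
have [i0 [i0m Hi0]] := argmax_nat g m.
have lowD : forall D, 0 <= D -> D `^ k * (#|` Pdelta X D|)%:R <= energy k X.
  move=> D D0; rewrite -sum_PD_const /energy; apply: ler_sum_seq => x xd.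
  case xP: (x \in Pdelta X D); rewrite /ind /= ?mul0r ?powR_ge0 // mul1r.
  apply: ge0_ler_powR => //; rewrite ?nnegrE ?ler0n //.
  by move: xP; rewrite PD_mem => /and3P[].
exists (2 ^ i0)%N%:R; split; first by rewrite ltr0n expn_gt0.
split; first by apply: lowD; rewrite ler0n.
pose jx x := trunc_log 2 (delta X x).
have dpos : forall x, x \in diffset X -> (0 < delta X x)%N.
  by move=> x xd; rewrite -(ltr0n R); exact: lt_le_trans ltr01 (delta_ge1 X x xd).
have jlo : forall x, x \in diffset X -> (2 ^ jx x <= delta X x)%N.
  by move=> x xd; apply: trunc_logP => //; apply: dpos.
have jhi : forall x, (delta X x < 2 ^ (jx x).+1)%N.
  by move=> x; apply: trunc_log_ltn.
have jm : forall x, x \in diffset X -> (jx x <= m)%N.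
  move=> x xd; apply: trunc_log_max => //; apply: leq_trans (jlo x xd) _.
  apply: leq_trans XN; rewrite -(ler_nat R); exact: delta_le_card.
have step1 : energy k X = \sum_(i <- iota 0 m.+1) \sum_(x <- diffset X)
      ind (jx x == i) * (delta X x)%:R `^ k.
  rewrite exchange_big /energy; apply: eq_big_seq => x xd.
  rewrite sum_indic ?iota_uniq // mem_iota add0n ltnS jm //.
  by rewrite /ind mul1r.
have step2 : forall i, \sum_(x <- diffset X) ind (jx x == i) * (delta X x)%:R `^ k <= 4 * g i.
  move=> i.
  apply: le_trans (_ : _ <= \sum_(x <- diffset X) ind (x \in Pdelta X (2 ^ i)%N%:R) *
                          (2 * (2 ^ i)%N%:R) `^ k) _.
    apply: ler_sum_seq => x xd.
    case ji: (jx x == i); last by rewrite /ind /= mul0r; apply: mulr_ge0; [exact: ind_ge0 | exact: powR_ge0].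
    move/eqP: ji => ji.
    have xP : x \in Pdelta X (2 ^ i)%N%:R.
      by rewrite PD_mem xd /= -ji ler_nat jlo //= -natrM -expnS ltr_nat jhi.
    rewrite xP /ind /= !mul1r; apply: ge0_ler_powR => //; rewrite ?nnegrE ?ler0n //.
      by apply: mulr_ge0; rewrite ?ler0n.
    by apply: ltW; rewrite -natrM -expnS ltr_nat -ji jhi.
  rewrite sum_PD_const /g powRM ?ler0n // mulrA.
  apply: ler_wpM2r; first by rewrite ler0n.
  apply: ler_wpM2r; first exact: powR_ge0.
  exact: pow2_le4.
rewrite step1.
apply: le_trans (_ : _ <= \sum_(i <- iota 0 m.+1) 4 * g i0) _.
  apply: ler_sum_seq => i; rewrite mem_iota add0n ltnS /= => im.
  apply: le_trans (step2 i) _; apply: ler_wpM2l; first by [].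
  exact: Hi0.
by rewrite sum_const_seq size_iota; apply: eqW'; rewrite /g; ring.
Qed.

End Dyadic.
Section Final.
Context {R : realType}.

Lemma ln2_pos : 0 < ln (2 : R).
Proof. by apply: ln_gt0; rewrite ltr1n. Qed.

Lemma levels_bound (n : nat) : (1 <= n)%N -> 1 <= ln (n%:R : R) ->
  4 * (trunc_log 2 n).+1%:R <= 4 * (1 + (ln (2 : R))^-1) * ln (n%:R : R).
Proof.
move=> n1 L1.
set m := trunc_log 2 n.
have h2 : (2 ^ m <= n)%N by apply: trunc_logP.
have hm : m%:R * ln (2 : R) <= ln (n%:R : R).
  rewrite mulr_natl -lnXn // -natrX ler_ln ?posrE ?ltr0n ?expn_gt0 //.
  by rewrite ler_nat.
have l2 := ln2_pos.
have hm' : m%:R <= ln (n%:R : R) / ln 2 by rewrite ler_pdivlMr.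
rewrite -mulrA ler_pM2l; last by rewrite ltr0n.
rewrite -(natr1 (R:=R) m) mulrDl mul1r addrC.
apply: lerD => //; by rewrite mulrC.
Qed.

End Final.

Theorem lemma1p7 (R : realType) :
  (* (1) *)
  (exists N : nat, forall A : {fset R}, (N <= #|` A|)%N ->
     exists B : {fset R}, [/\ B `<=` A,
       (#|` A|)%:R / 2 <= (#|` B|)%:R :> R &
       energy (12 / 7) B / ln (#|` A|)%:R <= energy (12 / 7) (rich A B)])
  /\
  (* (2) : absolute constants K, c (for ~ and <<), threshold N *)
  (exists (K c : R) (N : nat), [/\ 0 < K, 0 <= c &
     forall A B : {fset R}, (N <= #|` A|)%N -> B `<=` A ->
       (#|` A|)%:R / 2 <= (#|` B|)%:R :> R ->
       energy (12 / 7) B / ln (#|` A|)%:R <= energy (12 / 7) (rich A B) ->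
       exists D : R, 0 < D /\
         let L := ln (#|` A|)%:R `^ c in
         let RB := rich A B in
         let PD := Pdelta RB D in
         [/\ D `^ (12 / 7) * (#|` PD|)%:R <= K * L * energy (12 / 7) RB,
             energy (12 / 7) RB <= K * L * (D `^ (12 / 7) * (#|` PD|)%:R),
             energy (12 / 7) RB <= K * L * energy (12 / 7) B,
             energy (12 / 7) B <= K * L * energy (12 / 7) RB &
             D ^+ 2 * (#|` PD|)%:R ^+ 2 * (#|` B|)%:R ^+ 2
               <= K * (energy 3 B * (triples (popular A B) PD)%:R)]]).
Proof.
have k0 : (0 : R) <= 12 / 7 by rewrite divr_ge0 // ler0n.
have k2 : (12 / 7 : R) <= 2 by rewrite ler_pdivrMr ?ltr0n // -natrM ler_nat.
have kk : (0 : R) <= (12 / 7 : R) <= (2 : R) by rewrite k0 k2.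
split; first exact: part1.
have l2 := @ln2_pos R.
have l2i : 0 < (ln (2 : R))^-1 by rewrite invr_gt0.
set K := 4 * (1 + (ln (2 : R))^-1).
have K4 : 4 <= K by rewrite /K; rewrite ler_peMr //; rewrite lerDl ltW.
exists K, 1, (Num.truncn (expR (1 : R))).+1; split => //.
  by apply: lt_le_trans K4.
move=> A B HA BA hB hE.
set n := (#|` A|)%:R : R.
have nbig : expR 1 < n.
  apply: lt_le_trans (truncnS_gt _) _; by rewrite ler_nat.
have n0 : 0 < n by apply: lt_trans nbig; apply: expR_gt0.
have L1 : 1 < ln n.
  by rewrite -[X in X < _](expRK 1) ltr_ln // posrE expR_gt0.
have RBA : (#|` rich A B| <= #|` A|)%N.
  apply: fsubset_leq_card; exact: fsubset_trans (rich_sub A B) BA.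
have [D [D0 [Dlo Dhi]]] := dyadic (rich A B) (12 / 7) #|` A| kk RBA.
exists D; split => //.
move=> L RB PD.
have -> : L = ln n by rewrite /L powRr1 // ltW // (lt_trans ltr01 L1).
have KL1 : 1 <= K * ln n.
  have K1 : 1 <= K by apply: le_trans K4; rewrite ler1n.
  rewrite -[1]mul1r; apply: ler_pM; rewrite ?ler01 //; exact: ltW.
have E0 : 0 <= energy (12 / 7) RB by apply: energy_ge0.
have EB0 : 0 <= energy (12 / 7) B by apply: energy_ge0.
have X0 : 0 <= D `^ (12 / 7) * (#|` PD|)%:R by apply: mulr_ge0; [exact: powR_ge0 | rewrite ler0n].
have n1 : (1 <= #|` A|)%N by rewrite -(ltr0n R).
have Ln0 : 0 <= ln n by apply: ltW; apply: lt_trans ltr01 L1.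
have K1 : 1 <= K by apply: le_trans K4; rewrite ler1n.
rewrite /PD /RB; split.
- apply: le_trans Dlo _; rewrite -[X in X <= _]mul1r.
  by apply: ler_wpM2r; [exact: energy_ge0 | exact: KL1].
- apply: le_trans Dhi _; apply: ler_wpM2r; first exact: X0.
  exact: (levels_bound _ n1 (ltW L1)).
- apply: le_trans (energy_mono _ _ _ k0 (rich_sub A B)) _.
  rewrite -[X in X <= _]mul1r.
  by apply: ler_wpM2r; [exact: energy_ge0 | exact: KL1].
- move: hE; rewrite -/n ler_pdivrMr; last by apply: lt_trans ltr01 L1.
  move=> hE; apply: le_trans hE _; rewrite mulrC.
  by apply: ler_wpM2r; [exact: energy_ge0 | rewrite ler_peMl].
- apply: le_trans (triple_bound A B D D0) _; apply: ler_wpM2r K4.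
  by apply: mulr_ge0; [exact: energy_ge0 | rewrite ler0n].
Qed.
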